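(* Let $p\ge3$ be a prime and $G_7=T\rtimes\langle x,y\rangle\le AGL(2,p)$ with $x=\|1,1;0,1\|$ and $y=\|-1,0;0,-1\|$. Let $H=\langle r_1,r_2\rangle\le G_7$ with $|r_1|=|r_2|=2$ and $H\cong D_{2p}$, and suppose $\mathrm{Core}_{G_7}(H)=1$. Then for every $r_0\in G_7$ with $|r_0|=2$ we have $\langle r_0,r_1,r_2\rangle\ne G_7$.
   Context: $D_{2p}$ is dihedral of order $2p$; $\mathrm{Core}_G(H)=\bigcap_{g\in G}g^{-1}Hg$. $\|a,b;c,d\|$ is the $2\times2$ matrix over $\mathbb{F}_p$ with rows $(a,b),(c,d)$; $T\cong\mathbb{Z}_p^2$ is the group of translations $t_a:v\mapsto v+a$ of $V=\mathbb{F}_p^2$ (row vectors, right $GL(2,p)$-action), $AGL(2,p)=T\rtimes GL(2,p)$ with $g^{-1}t_ag=t_{ag}$. *)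

(* Defs.v *)
From HB Require Import structures.
From mathcomp Require Import all_boot all_algebra all_fingroup all_solvable.
Set Implicit Arguments. Unset Strict Implicit. Unset Printing Implicit Defensive.
Import GRing.Theory.

(* AGL(2,p) is realised as a permutation group on
   V = F_p^2 (row vectors).  Permutation product in MathComp is
   (s * t) v = t (s v), i.e. a right action, matching the paper's
   right action of GL(2,p) on row vectors. *)

Section AGL.
Variable p : nat.
Local Notation V := 'rV['F_p]_2.

Definition translation_fun (a : V) (v : V) : V := (v + a)%R.
Lemma translation_inj a : injective (translation_fun a).
Proof. by move=> u v; rewrite /translation_fun => /addIr. Qed.
Definition transl (a : V) : {perm V} := perm (@translation_inj a).

Definition lin_fun (M : 'M['F_p]_2) (v : V) : V :=
  if M \in unitmx then (v *m M)%R else v.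
Lemma lin_inj M : injective (lin_fun M).
Proof.
move=> u v; rewrite /lin_fun; case: ifP => // uM.
by move=> /(congr1 (mulmx^~ (invmx M))); rewrite -!mulmxA mulmxV // !mulmx1.
Qed.
Definition linperm (M : 'M['F_p]_2) : {perm V} := perm (@lin_inj M).

(* x = ||1,1;0,1||,  y = ||-1,0;0,-1|| *)
Definition mx_x : 'M['F_p]_2 := \matrix_(i < 2, j < 2)
  (if (i == 1%N :> nat) && (j == 0%N :> nat) then 0 else 1)%R.
Definition mx_y : 'M['F_p]_2 := (- 1%:M)%R.

Definition Tgrp : {set {perm V}} := [set transl a | a : V].

Definition G7 : {set {perm V}} :=
  <<Tgrp :|: [set linperm mx_x; linperm mx_y]>>%g.
End AGL.

(* Main.v *)
Require Import Defs.
From mathcomp Require Import all_boot all_algebra all_fingroup all_solvable.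
Set Implicit Arguments. Unset Strict Implicit. Unset Printing Implicit Defensive.
Import GRing.Theory.

Section Aux.
Variable p : nat.
Hypothesis p_prime : prime p.
Hypothesis p_ge3 : 3 <= p.
Local Notation V := 'rV['F_p]_2.
Local Open Scope ring_scope.

Definition U (i : 'F_p) : 'M['F_p]_2 := \matrix_(a < 2, b < 2)
  (if (a == 0%N :> nat) && (b == 1%N :> nat) then i else if a == b then 1 else 0).
Definition sg (s : bool) : 'F_p := if s then -1 else 1.
Definition Msi s i := sg s *: U i.

Lemma UD i j : U i *m U j = U (i + j).
Proof.
apply/matrixP => a b; rewrite !mxE !big_ord_recl big_ord0 !mxE.
case: a => [[|[|a]]] //= ?; case: b => [[|[|b]]] //= ?; rewrite /=;
  rewrite ?mul1r ?mul0r ?mulr0 ?mulr1 ?addr0 ?add0r //.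
  all: by rewrite addrC.
Qed.

Lemma U0 : U 0 = 1%:M.
Proof.
apply/matrixP => a b; rewrite !mxE.
case: a => [[|[|a]]] //= ?; case: b => [[|[|b]]] //= ?.
Qed.

Lemma MsiM s t i j : Msi s i *m Msi t j = Msi (s (+) t) (i + j).
Proof.
rewrite /Msi -scalemxAl -scalemxAr scalerA UD; congr (_ *: _).
by case: s; case: t; rewrite /sg /= ?mulN1r ?opprK ?mulr1 ?mul1r.
Qed.

Definition B (S : {set 'F_p}) : {set {perm V}} :=
  [set g : {perm V} | [exists s : bool, exists i in S,
     [forall v : V, g v == g 0 + v *m Msi s i]]].

Lemma BP (S : {set 'F_p}) (g : {perm V}) : reflect (exists s, exists2 i, i \in S & forall v, g v = g 0 + v *m Msi s i)
  (g \in B S).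
Proof.
rewrite inE; apply: (iffP existsP) => [[s /existsP [i /andP [iS /forallP H]]]|[s [i iS H]]].
  by exists s, i => // v; apply/eqP.
by exists s; apply/existsP; exists i; rewrite iS; apply/forallP => v; apply/eqP.
Qed.

Lemma B_group (S : {set 'F_p}) : 0 \in S -> (forall i j, i \in S -> j \in S -> i + j \in S) ->
  group_set (B S).
Proof.
move=> S0 SD; apply/group_setP; split.
  apply/BP; exists false, 0 => // v; rewrite !perm1 /Msi /sg U0 scale1r mulmx1 add0r.
  done.
move=> g h /BP [s [i iS Hg]] /BP [t [j jS Hh]]; apply/BP.
exists (s (+) t), (i + j); first exact: SD.
move=> v; rewrite !permM Hg (Hh (g 0 + _)) (Hh (g 0)) mulmxDl -mulmxA MsiM.
by rewrite addrA.
Qed.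

Lemma two_neq0 : (2%:R : 'F_p) != 0.
Proof.
rewrite -(dvdn_pcharf (pchar_Fp p_prime)); apply/negP => /(dvdn_leq (isT : 0 < 2)%N).
by rewrite leqNgt (leq_trans _ p_ge3).
Qed.

Definition e0 : V := \row_(j < 2) (if j == 0%N :> nat then 1 else 0).

Lemma e0M (W : 'M['F_p]_2) j : (e0 *m W) 0 j = W 0 j.
Proof. by rewrite !mxE !big_ord_recl big_ord0 !mxE /= mul1r mul0r !addr0. Qed.

Lemma U1 : mx_x p = U 1.
Proof.
apply/matrixP => a b; rewrite !mxE.
case: a => [[|[|a]]] //= ?; case: b => [[|[|b]]] //= ?.
Qed.

Lemma mx_x_unit : mx_x p \in unitmx.
Proof. by rewrite U1; case: (@mulmx1_unit _ _ (U 1) (U (-1))); rewrite ?UD ?subrr ?U0. Qed.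

Lemma mx_y_Msi : mx_y p = Msi true 0.
Proof. by rewrite /mx_y /Msi /sg U0 scaleN1r. Qed.

Lemma mx_y_unit : mx_y p \in unitmx.
Proof.
by rewrite mx_y_Msi; case: (@mulmx1_unit _ _ (Msi true 0) (Msi true 0));
  rewrite ?MsiM ?addr0 /Msi /sg /= ?U0 ?scale1r.
Qed.

Lemma G7_sub : G7 p \subset B setT.
Proof.
have gB : group_set (B setT) by apply: B_group => // *; rewrite inE.
rewrite (gen_subG _ (Group gB)) subUset; apply/andP; split.
  apply/subsetP => _ /imsetP [a _ ->]; apply/BP; exists false, 0 => // v.
  by rewrite !permE /translation_fun /Msi /sg U0 scale1r mulmx1 add0r addrC.
apply/subsetP => g /set2P [] ->; apply/BP.
  exists false, 1 => // v; rewrite !permE /lin_fun mx_x_unit mul0mx add0r.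
  by rewrite U1 /Msi /sg scale1r.
exists true, 0 => // v; rewrite !permE /lin_fun mx_y_unit mul0mx add0r.
by rewrite mx_y_Msi.
Qed.

Lemma invol_B0 (g : {perm V}) : g \in G7 p -> #[g]%g = 2 -> g \in B [set 0].
Proof.
move=> /(subsetP G7_sub) /BP [s [i _ Hg]] og.
have gg v : g (g v) = v.
  have := expg_order g; rewrite og expgS expg1 => /(congr1 (fun h : {perm V} => h v)).
  by rewrite permM perm1.
have a0 : g 0 + g 0 *m Msi s i = 0 by rewrite -Hg gg.
have vv (v : V) : v *m Msi false (i + i) = v.
  rewrite -(addbb s) -MsiM mulmxA.
  have : g (g v) = g 0 + g 0 *m Msi s i + v *m Msi s i *m Msi s i.
    by rewrite Hg (Hg v) mulmxDl addrA.
  by rewrite gg a0 add0r => <-.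
have ii : i + i = 0.
  have := congr1 (fun w : V => w 0 1) (vv e0).
  by rewrite /= e0M /Msi /sg scale1r !mxE.
apply/BP; exists s, 0; first by rewrite inE.
move: ii; rewrite -mulr2n -mulr_natl => /eqP; rewrite mulf_eq0 (negbTE two_neq0) /=.
by move=> /eqP <-.
Qed.

Lemma x_notin : linperm (mx_x p) \notin B [set 0].
Proof.
apply/negP => /BP [s [i]]; rewrite inE => /eqP -> H.
have := congr1 (fun w : V => w 0 1) (H e0).
rewrite !permE /lin_fun mx_x_unit mul0mx add0r /= !e0M U1 /Msi !mxE /= mulr0.
by move/eqP; rewrite oner_eq0.
Qed.
End Aux.

Theorem mainTheorem14 (p : nat) (p_prime : prime p) (p_ge3 : 3 <= p)
  (r1 r2 : {perm 'rV['F_p]_2}) :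
  r1 \in G7 p -> r2 \in G7 p ->
  #[r1]%g = 2 -> #[r2]%g = 2 ->
  (<<[set r1; r2]>> \isog 'D_(2 * p))%g ->
  gcore <<[set r1; r2]>>%g (G7 p) = 1%g ->
  forall r0 : {perm 'rV['F_p]_2},
    r0 \in G7 p -> #[r0]%g = 2 ->
    <<[set r0; r1; r2]>>%g != G7 p.
Proof.
move=> G1 G2 o1 o2 _ _ r0 G0 o0; apply/eqP => E.
have gB : group_set (@B p [set 0%R]).
  apply: B_group; first by rewrite inE.
  by move=> i j; rewrite !inE => /eqP -> /eqP ->; rewrite addr0.
have sub : <<[set r0; r1; r2]>>%g \subset @B p [set 0%R].
  rewrite (gen_subG _ (Group gB)); apply/subsetP => g Hg.
  have : (g == r0) || (g == r1) || (g == r2) by rewrite !inE in Hg.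
  by case/orP => [/orP[]|] /eqP ->; apply: invol_B0.
have xG : linperm (mx_x p) \in G7 p.
  by apply: mem_gen; rewrite !inE eqxx orbT.
by move: (@x_notin p); rewrite -E in xG; rewrite (subsetP sub _ xG).
Qed.
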